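(* For all integers $n\ge1$, $k\ge0$ and every sequence $\boldsymbol a$ of positive reals, \[ \theta_{n;k}(t)=\frac1{k!}B_k\big(x_1,\dots,x_k\big),\qquad x_\ell=(\ell-1)!\,A_n(\ell)\big(t^\ell-(t-1)^\ell\big), \] equivalently \[ \theta_{n;k}(t)=\sum_{\substack{m_1,m_2,\ldots\ge0\\ m_1+2m_2+3m_3+\cdots=k}}\ \prod_{i\ge1}\frac{1}{m_i!}\Big(\frac{A_n(i)\,(t^i-(t-1)^i)}{i}\Big)^{m_i}. \]
   Context: Let $\boldsymbol a=(a_j)_{j\ge1}$ be a sequence of positive reals. For integers $n\ge1$, $k\ge0$ let $\mathcal M_{n,k}=\{(\ell_1,\dots,\ell_k)\in\mathbb N^k: n\ge\ell_1\ge\cdots\ge\ell_k\ge1\}$. For $\vec\ell\in\mathcal M_{n,k}$ let $\sigma(\vec\ell)=|\{1\le j\le k-1:\ell_j=\ell_{j+1}\}|$ and $w(\vec\ell)=\prod_{j=1}^k a_{\ell_j}$. Define $\theta_{n;k}(t)=\sum_{\vec\ell\in\mathcal M_{n,k}}w(\vec\ell)\,t^{\sigma(\vec\ell)}$, with $\theta_{n;0}(t)=1$, and $A_n(j)=\sum_{m=1}^n a_m^j$. The complete Bell polynomials $B_j$ are defined by $\exp\big(\sum_{\ell\ge1}x_\ell z^\ell/\ell!\big)=\sum_{j\ge0}B_j(x_1,\dots,x_j)z^j/j!$. *)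

(* Defs.v *)
From HB Require Import structures.
From mathcomp Require Import all_boot all_order all_algebra.
Set Implicit Arguments. Unset Strict Implicit. Unset Printing Implicit Defensive.
Import Order.TTheory GRing.Theory Num.Theory.
Local Open Scope ring_scope.

Definition sigma (s : seq nat) : nat :=
  (\sum_(j < (size s).-1) (nth 0 s j == nth 0 s j.+1))%N.

(* M_{n,k}: an element l of 'I_n^k encodes (l_1+1, ..., l_k+1) in [1,n]^k,
   required to be weakly decreasing.  The sequence a is indexed from 1
   (a 0 is irrelevant). *)
Definition theta (R : realFieldType) (a : nat -> R) (n k : nat) (t : R) : R :=
  \sum_(l : k.-tuple 'I_n | sorted (fun x y : 'I_n => (y <= x)%N) l)
    (\prod_(i <- l) a (val i).+1) * t ^+ sigma (map (fun i : 'I_n => (val i).+1) l).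

Definition Asum (R : realFieldType) (a : nat -> R) (n j : nat) : R :=
  \sum_(1 <= m < n.+1) a m ^+ j.

(* Complete Bell polynomial B_k(x_1,...,x_k) read off from the generating
   function exp(sum_l x_l z^l / l!): since f := sum_{l>=1} x_l z^l/l! has no
   constant term, the coefficient of z^k in exp(f) equals that of
   sum_{m=0}^k f^m/m!, and only the terms l <= k of f matter. *)
Definition bell (R : realFieldType) (k : nat) (x : nat -> R) : R :=
  let f : {poly R} := \sum_(1 <= l < k.+1) (x l / (l`!)%:R) *: 'X^l in
  (k`!)%:R * (\sum_(m < k.+1) ((m`!)%:R)^-1 *: f ^+ m)`_k.

(* Main.v *)
Require Import Defs.
From HB Require Import structures.
From mathcomp Require Import all_boot all_order all_algebra.
From mathcomp Require Import zify ring.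
Import Order.TTheory GRing.Theory Num.Theory.
Local Open Scope ring_scope.
Set Implicit Arguments. Unset Strict Implicit. Unset Printing Implicit Defensive.

Section PolyLD.
Variable R : realFieldType.
Implicit Types p q f g : {poly R}.

Definition eqK K p q := forall i, (i <= K)%N -> p`_i = q`_i.
Definition LD K f q := eqK K ('X * f^`()) (f * q).

Lemma eqKM K p q r : eqK K p q -> eqK K (p*r) (q*r).
Proof.
move=> h i hi; rewrite !coefM; apply: eq_bigr => j _; rewrite h //.
apply: leq_trans hi; rewrite -ltnS; exact: ltn_ord.
Qed.

Lemma eqKD K p1 p2 q1 q2 : eqK K p1 q1 -> eqK K p2 q2 -> eqK K (p1+p2) (q1+q2).
Proof. by move=> h1 h2 i hi; rewrite !coefD h1 ?h2. Qed.

Lemma LD_mul K f g q1 q2 : LD K f q1 -> LD K g q2 -> LD K (f*g) (q1+q2).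
Proof.
move=> h1 h2; rewrite /LD derivM mulrDr.
have -> : f * g * (q1 + q2) = f * q1 * g + g * q2 * f by ring.
apply: eqKD; first by rewrite mulrA; exact: eqKM.
have -> : 'X * (f * g^`()) = 'X * g^`() * f by ring.
exact: eqKM.
Qed.

Lemma LD_prod K I (r : seq I) (F : I -> {poly R}) Q :
  (forall i, LD K (F i) (Q i)) -> LD K (\prod_(i <- r) F i) (\sum_(i <- r) Q i).
Proof.
move=> h; elim: r => [|x r IH]; rewrite ?big_nil ?big_cons.
  by rewrite /LD => i _; rewrite mulr0 -polyC1 derivC mulr0.
exact: LD_mul.
Qed.

Lemma eqK_LD K f q q' : LD K f q -> eqK K q q' -> LD K f q'.
Proof. move=> h hq i hi; rewrite h // (mulrC f) (mulrC f); exact: (@eqKM K q q' f hq i hi). Qed.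

Lemma LD_uniq K f g q : q`_0 = 0 -> LD K f q -> LD K g q -> f`_0 = g`_0 -> eqK K f g.
Proof.
move=> q0 hf hg h0 i; elim: i {-2}i (leqnn i) => [|m IH] i hi hiK.
  by move: hi; rewrite leqn0 => /eqP->.
have [hlt|hge] := ltnP i m.+1; first by apply: IH.
have -> : i = m.+1 by apply/eqP; rewrite eqn_leq hi hge.
have e1 := hf m.+1 (leq_trans hge hiK); have e2 := hg m.+1 (leq_trans hge hiK).
rewrite coefXM coef_deriv /= coefM big_ord_recr /= subnn q0 mulr0 addr0 in e1.
rewrite coefXM coef_deriv /= coefM big_ord_recr /= subnn q0 mulr0 addr0 in e2.
apply: (@pmulrnI R m.+1) => //=; rewrite e1 e2; apply: eq_bigr => j _.
rewrite IH //; have := ltn_ord j; lia.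
Qed.

Definition low p m := forall i, (i < m)%N -> p`_i = 0.

Lemma lowM p q a b : low p a -> low q b -> low (p*q) (a+b).
Proof.
move=> hp hq i hi; rewrite coefM big1 // => j _.
case: (ltnP j a) => ja; first by rewrite hp ?mul0r.
rewrite hq ?mulr0 //; have := ltn_ord j; lia.
Qed.

Lemma lowX f m : low f 1 -> low (f^+m) m.
Proof.
move=> h; elim: m => [|m IH]; first by [].
by rewrite exprS -add1n; apply: lowM.
Qed.

Lemma low_eqK K p : low p K.+1 -> eqK K p 0.
Proof. by move=> h i hi; rewrite coef0 h. Qed.

Lemma fact_nz m : (m`!)%:R != 0 :> R.
Proof. by rewrite pnatr_eq0 -lt0n fact_gt0. Qed.

Lemma LD_exp K f : f`_0 = 0 ->
  LD K (\sum_(m < K.+1) ((m`!)%:R)^-1 *: f^+m) ('X * f^`()).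
Proof.
move=> f0.
have lf : low f 1 by move=> i; rewrite ltnS leqn0 => /eqP->.
rewrite /LD raddf_sum /=.
have -> : \sum_(i < K.+1) (((i`!)%:R)^-1 *: f ^+ i)^`() =
          (\sum_(i < K) ((i`!)%:R)^-1 *: f ^+ i) * f^`().
  rewrite big_ord_recl /= derivZ deriv_exp mulr0n scaler0 add0r mulr_suml.
  apply: eq_bigr => i _; rewrite derivZ deriv_exp /= factS natrM invfM.
  by rewrite add0n /bump add1n -scaler_nat scalerA mulrAC mulVf ?pnatr_eq0 // mul1r -scalerAl mulrC.
rewrite big_ord_recr /= mulrDl.
have -> : 'X * ((\sum_(i < K) ((i`!)%:R)^-1 *: f ^+ i) * f^`()) =
  (\sum_(i < K) ((i`!)%:R)^-1 *: f ^+ i) * ('X * f^`()) + 0 by ring.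
apply: eqKD => // i hi.
rewrite coef0 -scalerAl coefZ; suff -> : (f ^+ K * ('X * f^`()))`_i = 0 by rewrite mulr0.
apply: (@lowM _ _ K 1) => //; first exact: lowX.
  by move=> j; rewrite ltnS leqn0 => /eqP->; rewrite coefXM.
by rewrite addn1.
Qed.

Lemma exp_coef0 K f : f`_0 = 0 ->
  (\sum_(m < K.+1) ((m`!)%:R)^-1 *: f^+m)`_0 = 1.
Proof.
move=> f0; have lf : low f 1 by move=> i; rewrite ltnS leqn0 => /eqP->.
rewrite coef_sum big_ord_recl /= big1 ?addr0.
  by rewrite expr0 coefZ coefC /= invr1 mulr1.
move=> i _; rewrite coefZ (@lowX f _ lf) ?mulr0 // /bump add1n.
Qed.

End PolyLD.
Set Implicit Arguments. Unset Strict Implicit. Unset Printing Implicit Defensive.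
Fixpoint sig (s : seq nat) : nat :=
  match s with
  | x :: ((y :: _) as r) => ((x == y) + sig r)%N
  | _ => 0%N
  end.

Definition geN := fun x y : nat => (y <= x)%N.

Fixpoint Sq (n k : nat) : seq (seq nat) :=
  match n with
  | 0 => if k is 0 then [:: [::]] else [::]
  | n'.+1 => [seq nseq j n ++ s | j <- index_iota 0 k.+1, s <- Sq n' (k - j)]
  end.

Lemma geN_trans : transitive geN.
Proof. by move=> x y z; rewrite /geN => h1 h2; apply: leq_trans h2 h1. Qed.

Lemma sorted_nseq_cat j y s : all (fun x => x <= y)%N s -> sorted geN s ->
  sorted geN (nseq j y ++ s).
Proof.
move=> ha hs; elim: j => [|j IH] //=.
rewrite (path_sortedE geN_trans) IH andbT all_cat ha andbT.
by rewrite all_nseq; apply/orP; right; rewrite /geN.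
Qed.

Lemma split_sorted n s : all (fun x => x <= n.+1)%N s -> sorted geN s ->
  exists j s', [/\ s = nseq j n.+1 ++ s', all (fun x => x <= n)%N s' & sorted geN s'].
Proof.
elim: s => [|x s IH] /=; first by move=> _ _; exists 0%N, [::].
move=> /andP[hx ha] hp.
have hs : sorted geN s by apply: path_sorted hp.
move: hp; rewrite (path_sortedE geN_trans) => /andP[hxs _].
have [ex|nx] := eqVneq x n.+1.
  have [j [s' [-> h1 h2]]] := IH ha hs.
  by exists j.+1, s'; rewrite ex.
have xn : (x <= n)%N by move: hx nx; rewrite leq_eqVlt => /orP[->//|].
exists 0%N, (x :: s); split => //=; last by rewrite (path_sortedE geN_trans) hxs.
rewrite xn /=; apply/allP => y hy; apply: leq_trans xn.
by have := allP hxs y hy.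
Qed.

Lemma Sq_memP n k s : (s \in Sq n k) =
  [&& size s == k, all (fun x => 0 < x <= n)%N s & sorted geN s].
Proof.
elim: n k s => [|n IH] k s.
  case: k => [|k]; case: s => [|x s] //=; rewrite ?inE //=; case: x => [|x] //=; by rewrite !andbF.
have -> : Sq n.+1 k = [seq nseq j n.+1 ++ s0 | j <- index_iota 0 k.+1, s0 <- Sq n (k - j)] by [].


apply/allpairsPdep/idP.
  move=> [j [s' [hj hs' ->]]]; move: hs'; rewrite IH => /and3P[/eqP sz al so].
  move: hj; rewrite mem_index_iota => /andP[_ jk].
  rewrite size_cat size_nseq sz all_cat all_nseq.
  apply/and3P; split.
  - by apply/eqP; lia.
  - have -> : all (fun x => 0 < x <= n.+1)%N s' by apply: sub_all al => y /andP[-> h] /=; exact: leqW.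
    by rewrite andbT /= leqnn orbT.
  - apply: sorted_nseq_cat => //; apply/allP => y hy.
    have := allP al y hy => /andP[_ h]; exact: leqW.
move=> /and3P[/eqP sz al so].
have al' : all (fun x => x <= n.+1)%N s by apply/allP => y hy; have /andP[] := allP al y hy.
have [j [s' [e al2 so2]]] := @split_sorted n s al' so.
exists j, s'; split => //.
  by rewrite mem_index_iota /=; rewrite -sz e size_cat size_nseq; lia.
rewrite IH so2 andbT; apply/andP; split.
  by rewrite -sz e size_cat size_nseq; apply/eqP; lia.
apply/allP => y hy; rewrite (allP al2 y hy) andbT.
have : y \in s by rewrite e mem_cat hy orbT.
by move=> /(allP al) /andP[].
Qed.

Lemma Sq_uniq n k : uniq (Sq n k).
Proof.
elim: n k => [|n IH] k; first by case: k.
have -> : Sq n.+1 k = [seq nseq j n.+1 ++ s0 | j <- index_iota 0 k.+1, s0 <- Sq n (k - j)] by [].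
apply: allpairs_uniq_dep; first exact: iota_uniq.
  by move=> j _; apply: IH.
move=> [j1 s1] [j2 s2] /allpairsPdep [x1 [y1 [_ h1 [e1 e1']]]].
move=> /allpairsPdep [x2 [y2 [_ h2 [e2 e2']]]] /= e.
subst x1 x2 y1 y2.
have c0 : forall j s' , s' \in Sq n (k - j) -> count (pred1 n.+1) s' = 0%N.
  move=> j s' hs; move: hs; rewrite Sq_memP => /and3P[_ al _].
  apply/eqP; rewrite -leqn0 leqNgt -has_count; apply/hasPn => y hy /=.
  by have /andP[_ h] := allP al y hy; rewrite neq_ltn ltnS h.
have ej : j1 = j2.
  have := congr1 (count (pred1 n.+1)) e.
  by rewrite !count_cat !count_nseq /= eqxx !mul1n (c0 _ _ h1) (c0 _ _ h2) !addn0.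
subst j2; move/eqP: e; rewrite eqseq_cat ?size_nseq // eqxx /= => /eqP es.
by subst s2.
Qed.

Section Weights.
Variable R : realFieldType.
Variable a : nat -> R.
Variable t : R.

Definition w (s : seq nat) : R := (\prod_(x <- s) a x) * t ^+ sig s.
Definition cc m j : R := if j is j'.+1 then a m ^+ j * t ^+ j' else 1.
Definition T n k := \sum_(s <- Sq n k) w s.

Lemma sig_nseq_cat j y s : (forall x, x \in s -> x != y) ->
  sig (nseq j.+1 y ++ s) = (j + sig s)%N.
Proof.
move=> h; elim: j => [|j IH].
  case: s h => [|z s] h //=.
  by have := h z (mem_head _ _); rewrite eq_sym => /negbTE ->.
transitivity (1 + sig (nseq j.+1 y ++ s))%N; first by rewrite /= eqxx.
by rewrite IH; lia.
Qed.

Lemma iter_mul (x : R) j : iter j (GRing.mul x) 1 = x ^+ j.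
Proof. by elim: j => [|j IH] //=; rewrite IH exprS. Qed.

Lemma w_cat j n s : all (fun x => x <= n)%N s -> w (nseq j n.+1 ++ s) = cc n.+1 j * w s.
Proof.
move=> h; rewrite /w big_cat big_nseq iter_mul.
case: j => [|j]; first by rewrite /= expr0 !mul1r.
rewrite sig_nseq_cat /=; last by move=> x /(allP h); rewrite neq_ltn ltnS => ->.
rewrite exprD; ring.
Qed.

Lemma T_rec n k : T n.+1 k = \sum_(j < k.+1) cc n.+1 j * T n (k - j).
Proof.
rewrite /T.
have -> : Sq n.+1 k = [seq nseq j n.+1 ++ s0 | j <- index_iota 0 k.+1, s0 <- Sq n (k - j)] by [].
rewrite big_allpairs_dep /= big_mkord.
apply: eq_bigr => j _; rewrite big_distrr /=; apply: eq_big_seq => s hs.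
rewrite w_cat //; move: hs; rewrite Sq_memP => /and3P[_ al _].
by apply: sub_all al => x /andP[].
Qed.

Lemma T00 : T 0 0 = 1.
Proof. by rewrite /T /= big_cons big_nil /w big_nil /= mul1r addr0. Qed.

Lemma T0S k : T 0 k.+1 = 0.
Proof. by rewrite /T big_nil. Qed.

Lemma Tn0 n : T n 0 = 1.
Proof.
elim: n => [|n IH]; first exact: T00.
by rewrite T_rec big_ord1 /= subnn IH mul1r.
Qed.

End Weights.

Lemma sigmaE s : sigma s = sig s.
Proof.
elim: s => [|x s IH]; first by rewrite /sigma big_ord0.
case: s IH => [|y s] IH; first by rewrite /sigma big_ord0.
transitivity ((x == y) + sigma (y :: s))%N; last by rewrite IH.
rewrite /sigma /= big_ord_recl /=.
by congr (_ + _)%N; apply: eq_bigr => i _; rewrite add0n.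
Qed.

Lemma theta_T (R : realFieldType) (a : nat -> R) t n k :
  theta a n.+1 k t = T a t n.+1 k.
Proof.
pose g := fun i : 'I_n.+1 => (val i).+1.
have gi : injective g by move=> i j /succn_inj /val_inj.
rewrite /theta.
rewrite (eq_bigr (fun l : k.-tuple 'I_n.+1 => w a t (map g l))); last first.
  by move=> l _; rewrite /w big_map sigmaE.
rewrite -big_filter -(big_map (fun l : k.-tuple 'I_n.+1 => map g l) xpredT (w a t)).
rewrite /T; apply: perm_big; apply: uniq_perm.
- rewrite map_inj_uniq ?filter_uniq ?index_enum_uniq //.
  by move=> l1 l2 /(inj_map gi) /val_inj.
- exact: Sq_uniq.
move=> s; rewrite Sq_memP; apply/mapP/idP.
  move=> [l hl ->]; rewrite mem_filter in hl; case/andP: hl => hs _.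
  rewrite size_map size_tuple eqxx /=; apply/andP; split.
    by apply/allP => y /mapP[i _ ->] /=; rewrite ltn_ord.
  have -> : sorted geN (map g l) = sorted (fun x y : 'I_n.+1 => (val y <= val x)%N) l.
    by rewrite sorted_map; apply: eq_sorted => x y; rewrite /relpre /geN /g.
  exact: hs.
move=> /and3P[/eqP sz al so].
pose hh := fun x : nat => (inord x.-1 : 'I_n.+1).
have szt : size (map hh s) == k by rewrite size_map sz.
exists (Tuple szt).
  rewrite mem_filter mem_index_enum andbT /=.
  apply: (homo_sorted_in (P := fun x => (0 < x <= n.+1)%N)) so => //.
  move=> x y hx hy; rewrite /geN /hh !inordK //; move: hx hy; rewrite !unfold_in /=; lia.
have e : map g (map hh s) = s.
  rewrite -map_comp -[X in _ = X]map_id; apply/eq_in_map => x hx /=.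
  rewrite /g /hh /= inordK; have := allP al x hx; lia.
by rewrite /= e.
Qed.
Section GF.
Variable R : realFieldType.
Variables (a : nat -> R) (t : R) (K : nat).

Definition ee l : R := t ^+ l - (t - 1) ^+ l.
Definition hh m : {poly R} := \poly_(j < K.+1) cc a t m j.
Definition qq m : {poly R} := \poly_(l < K.+1) (a m ^+ l * ee l).
Definition HH n : {poly R} := \prod_(m < n) hh m.+1.
Definition QQ n : {poly R} := \poly_(l < K.+1) (Asum a n l * ee l).

Lemma H_coef n i : (i <= K)%N -> (HH n)`_i = T a t n i.
Proof.
elim: n i => [|n IH] i hi.
  rewrite /HH big_ord0 coef1; case: i hi => [|i] _; [by rewrite T00 | by rewrite T0S].
rewrite /HH big_ord_recr /= -/(HH n) coefM T_rec.
rewrite (reindex_inj rev_ord_inj) /=; apply: eq_bigr => j _.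
rewrite coef_poly.
have hj := ltn_ord j.
have e1 : (i.+1 - j.+1 = i - j)%N by lia.
have e2 : (i - (i - j) = j)%N by lia.
rewrite e1 e2 ifT; last by lia.
by rewrite IH 1?mulrC //; lia.
Qed.

Lemma bump0 i : bump 0 i = i.+1.
Proof. by []. Qed.

Lemma core_id j : ee j.+1 + \sum_(r < j.+1) t ^+ r * ee (j - r) = t ^+ j *+ j.+1.
Proof.
elim: j => [|j IH].
  by rewrite big_ord1 /ee subnn !expr0 !expr1 mulr1n; ring.
rewrite big_ord_recl subn0.
rewrite (eq_bigr (fun r : 'I_j.+1 => t * (t ^+ r * ee (j - r)))); last first.
  by move=> r _; rewrite /= bump0 subSS exprS mulrA.
rewrite -big_distrr /= expr0 mul1r.
set X := \sum_(i < j.+1) _.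
have IH' : X = t ^+ j *+ j.+1 - ee j.+1 by rewrite -IH [ee _ + _]addrC addrK.
rewrite IH' /ee !exprS !mulrS -mulrnAr; ring.
Qed.

Lemma LD_h m : LD K (hh m) (qq m).
Proof.
move=> i hi; rewrite coefXM coefM.
case: i hi => [|i] hi /=.
  by rewrite big_ord1 !coef_poly /= /ee !expr0 subrr !mulr0.
rewrite coef_deriv coef_poly ifT; last by lia.
rewrite big_ord_recl /= subn0 !coef_poly ltn0Sn /= ifT; last by lia.
rewrite (eq_bigr (fun r : 'I_i.+1 => a m ^+ i.+1 * (t ^+ r * ee (i - r)))); last first.
  move=> r _; have hr := ltn_ord r.
  rewrite /= bump0 subSS !coef_poly ifT; last by lia.
  rewrite ifT; last by lia.
  rewrite /cc.
  have -> : a m ^+ i.+1 = a m ^+ r.+1 * a m ^+ (i - r).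
    by rewrite -exprD; congr (_ ^+ _); lia.
  ring.
rewrite -big_distrr /= mul1r -mulrDr core_id /cc mulrnAr //.
Qed.

Lemma Qsum n : \sum_(m < n) qq m.+1 = QQ n.
Proof.
apply/polyP => i; rewrite coef_sum coef_poly.
under eq_bigr => m _ do rewrite coef_poly.
case: ifP => _; last by rewrite big1.
by rewrite -big_distrl /= /Asum big_add1 /= big_mkord.
Qed.

Lemma LD_H n : LD K (HH n) (QQ n).
Proof. rewrite -Qsum; apply: LD_prod => m; exact: LD_h. Qed.

Lemma Q0 n : (QQ n)`_0 = 0.
Proof. by rewrite coef_poly /= /ee !expr0 subrr mulr0. Qed.

End GF.
Unset Implicit Arguments.
Theorem mainTheorem3 (R : realFieldType) (a : nat -> R)
  (ha : forall j : nat, (0 < j)%N -> 0 < a j) (n k : nat) (hn : (1 <= n)%N) (t : R) :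
  theta a n k t =
    ((k`!)%:R)^-1 *
      bell k (fun l => ((l.-1)`!)%:R * Asum a n l * (t ^+ l - (t - 1) ^+ l))
  /\
  theta a n k t =
    \sum_(m : {ffun 'I_k -> 'I_k.+1} | (\sum_(i < k) (i.+1 * m i))%N == k)
      \prod_(i < k)
        ((((m i)`!)%:R)^-1 *
         (Asum a n i.+1 * (t ^+ i.+1 - (t - 1) ^+ i.+1) / (i.+1)%:R) ^+ (m i : nat)).
Proof.
case: n hn => [//|n'] _.
have LDH := @LD_H R a t k n'.+1.
have H0 : (HH a t k n'.+1)`_0 = 1 by rewrite H_coef // Tn0.
have Hk : (HH a t k n'.+1)`_k = theta a n'.+1 k t by rewrite H_coef // theta_T.
split.
  rewrite /bell /=.
  set f := (\sum_(1 <= l < k.+1) _).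
  have f0 : f`_0 = 0.
    rewrite /f coef_sum big1_seq // => l /andP[_]; rewrite mem_index_iota => /andP[hl _].
    by rewrite coefZ coefXn eq_sym (gtn_eqF hl) mulr0.
  have eqf : eqK k ('X * f^`()) (QQ a t k n'.+1).
    move=> i hi; rewrite coefXM [X in _ = X]coef_poly ltnS hi.
    case: i hi => [|i] hi /=; first by rewrite /ee !expr0 subrr mulr0.
    rewrite coef_deriv /f coef_sum.
    rewrite (eq_bigr (fun l => if l == i.+1 then (l.-1)`!%:R * Asum a n'.+1 l * (t ^+ l - (t - 1) ^+ l) / l`!%:R else 0)); last first.
      by move=> l _; rewrite coefZ coefXn eq_sym; case: eqP => _; [rewrite mulr1 | rewrite mulr0].
    rewrite -big_mkcond big_nat1_eq ifT; last by apply/andP; split; lia.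
    have h1 := fact_nz R i; have h2 : (i.+1)%:R != 0 :> R by rewrite pnatr_eq0.
    rewrite /ee /= factS natrM -mulr_natr; field.
    by rewrite h1 nat1r h2.
  have LDE := LD_exp (K:=k) f0.
  have EH := LD_uniq (@Q0 R a t k n'.+1) (eqK_LD LDE eqf) LDH (etrans (exp_coef0 k f0) (esym H0)).
  by rewrite -Hk -(EH k (leqnn k)) mulKf // fact_nz.
pose b := fun i : 'I_k => Asum a n'.+1 i.+1 * (t ^+ i.+1 - (t - 1) ^+ i.+1) / (i.+1)%:R.
pose gg := fun i : 'I_k => \sum_(m < k.+1) ((m`!)%:R)^-1 *: (b i *: 'X^(i.+1)) ^+ m.
have g0 : forall i, (b i *: 'X^(i.+1))`_0 = 0 by move=> i; rewrite coefZ coefXn mulr0.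
have LDG : LD k (\prod_(i < k) gg i) (\sum_(i < k) 'X * (b i *: 'X^(i.+1))^`()).
  by apply: LD_prod => i; exact: (LD_exp (K:=k) (g0 i)).
have eqg : eqK k (\sum_(i < k) 'X * (b i *: 'X^(i.+1))^`()) (QQ a t k n'.+1).
  move=> l hl; rewrite coef_sum coef_poly ltnS hl.
  case: l hl => [|l] hl.
    rewrite big1 => [|i _]; [by rewrite /ee !expr0 subrr mulr0 | by rewrite coefXM].
  have hlk : (l < k)%N by lia.
  rewrite (bigD1 (Ordinal hlk)) //= big1 ?addr0.
    rewrite coefXM /= derivZ derivXn /= coefZ coefMn coefXn eqxx /b /ee /=.
    have h2 : (l.+1)%:R != 0 :> R by rewrite pnatr_eq0.
    by rewrite divfK.
  move=> i hi; rewrite coefXM /= derivZ derivXn /= coefZ coefMn coefXn.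
  have -> : (l == i :> nat) = false.
    apply/negbTE; move: hi; apply: contra => /eqP e.
    by apply/eqP/val_inj => /=; rewrite e.
  by rewrite mul0rn mulr0.
have G0 : (\prod_(i < k) gg i)`_0 = 1.
  by rewrite coef0_prod big1 // => i _; rewrite /gg (exp_coef0 k (g0 i)).
have EG := LD_uniq (@Q0 R a t k n'.+1) (eqK_LD LDG eqg) LDH (etrans G0 (esym H0)).
rewrite -Hk -(EG k (leqnn k)) /gg bigA_distr_bigA coef_sum [RHS]big_mkcond /=.
apply: eq_bigr => m _.
have -> : \prod_(i < k) ((((m i)`!)%:R)^-1 *: (b i *: 'X^(i.+1)) ^+ m i) =
   (\prod_(i < k) ((((m i)`!)%:R)^-1 * b i ^+ m i)) *: 'X^(\sum_(i < k) i.+1 * m i).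
  rewrite -mul_polyC rmorph_prod -prodrXr -big_split /=; apply: eq_bigr => i _.
  by rewrite exprZn scalerA exprM mul_polyC.
rewrite coefZ coefXn eq_sym /b; case: eqP => _; by rewrite ?mulr1 ?mulr0.
Qed.
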